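(* Let $Q$ be a polyhedral partially ordered abelian group and let $M$ be a downset-finite $Q$-module. Then $M$ admits a primary decomposition, i.e., there exist finitely many submodules $M_1,\dots,M_r\subseteq M$ such that each quotient $M/M_i$ is coprimary and the natural map $M\to\bigoplus_{i=1}^r M/M_i$ is injective.
   Context: A partially ordered abelian group is an abelian group $Q$ generated by a submonoid $Q_+$ (the positive cone) whose only unit is $0$; the order is $q\preceq q'$ iff $q'-q\in Q_+$. A face of $Q$ (or of $Q_+$) is a submonoid $\sigma\subseteq Q_+$ such that $Q_+\setminus\sigma$ is an ideal of the monoid $Q_+$ (i.e. $(Q_+\setminus\sigma)+Q_+\subseteq Q_+\setminus\sigma$). $Q$ is polyhedral if $Q_+$ has only finitely many faces. A $Q$-module is a $Q$-graded vector space $M=\bigoplus_{q\in Q}M_q$ over a field $k$ with linear maps $M_q\to M_{q'}$ for $q\preceq q'$, compatible with composition (identity for $q=q'$); equivalently a $Q$-graded module over the monoid algebra $k[Q_+]$. Homomorphisms are degree-preserving linear maps commuting with these structure maps. A downset $D\subseteq Q$ is a subset with $D-Q_+=D$; the downset module $k[D]$ has $k$ in each degree $q\in D$, $0$ elsewhere, identity structure maps between degrees in $D$ (it is a quotient of $k[Q]$). A downset hull of $M$ is an injection $M\hookrightarrow\bigoplus_{j\in J}E_j$ with each $E_j$ a downset module; $M$ is downset-finite if it admits such a hull with $J$ finite. For a face $\tau$, $\mathbb Z\tau$ is the subgroup generated by $\tau$, and the localization of $M$ along $\tau$ is $M_\tau=M\otimes_{k[Q_+]}k[Q_++\mathbb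 Z\tau]$, with natural map $M\to M_\tau$. The submodule of $M$ globally supported on $\tau$ is $\Gamma_\tau M=\bigcap_{\tau'\not\subseteq\tau}\ker(M\to M_{\tau'})$, the intersection over faces $\tau'$ not contained in $\tau$. A module $M$ (over polyhedral $Q$) is coprimary (more precisely $\tau$-coprimary) if for some face $\tau$ the map $M\to M_\tau$ is injective and $\Gamma_\tau(M_\tau)$ is an essential submodule of $M_\tau$ (every nonzero submodule of $M_\tau$ meets it nontrivially). *)

(* Defs.v *)
From HB Require Import structures.
From mathcomp Require Import all_boot all_algebra.
From mathcomp Require Import boolp classical_sets cardinality.
Set Implicit Arguments. Unset Strict Implicit. Unset Printing Implicit Defensive.
Import GRing.Theory.
Local Open Scope classical_set_scope.
Local Open Scope ring_scope.

(** Q-modules as data: a family of k-vector spaces indexed by Q together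
    with (total) structure maps; only the maps qmap q q' with q <= q' are
    meaningful, and all axioms/definitions below only ever use those. *)
Record qmod (Q : zmodType) (k : fieldType) := QMod {
  qcar : Q -> lmodType k ;
  qmap : forall q q' : Q, qcar q -> qcar q' }.
Arguments qcar {Q k} _ _.
Arguments qmap {Q k} _ _ _ _.

Section Defs.
Variables (Q : zmodType) (Qp : set Q) (k : fieldType).

Definition qle (q q' : Q) : Prop := Qp (q' - q).

(** Q is a partially ordered abelian group with positive cone Qp:
    Qp is a submonoid, its only unit is 0, and it generates Q as a group
    (the subgroup generated by a submonoid is the set of differences). *)
Definition is_poag : Prop :=
  [/\ Qp 0, (forall a b, Qp a -> Qp b -> Qp (a + b)),
      (forall a, Qp a -> Qp (- a) -> a = 0) &
      (forall q, exists a b, [/\ Qp a, Qp b & q = a - b])].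

Definition is_face (s : set Q) : Prop :=
  [/\ s `<=` Qp, s 0, (forall a b, s a -> s b -> s (a + b)) &
      (forall a b, Qp a -> ~ s a -> Qp b -> ~ s (a + b))].

Definition polyhedral : Prop := finite_set [set s : set Q | is_face s].

Definition is_qmod (M : qmod Q k) : Prop :=
  [/\ (forall q q', qle q q' -> forall a (x y : qcar M q),
          qmap M q q' (a *: x + y) = a *: qmap M q q' x + qmap M q q' y),
      (forall q (x : qcar M q), qmap M q q x = x) &
      (forall q q' q'', qle q q' -> qle q' q'' -> forall x : qcar M q,
          qmap M q' q'' (qmap M q q' x) = qmap M q q'' x)].

Definition qhom (M N : qmod Q k) := forall q, qcar M q -> qcar N q.

Definition is_qhom (M N : qmod Q k) (f : qhom M N) : Prop :=
  (forall q a (x y : qcar M q), f q (a *: x + y) = a *: f q x + f q y) /\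
  (forall q q', qle q q' -> forall x : qcar M q,
      f q' (qmap M q q' x) = qmap N q q' (f q x)).

Definition qsub (M : qmod Q k) := forall q, set (qcar M q).

Definition is_qsub (M : qmod Q k) (S : qsub M) : Prop :=
  [/\ (forall q, S q 0),
      (forall q a (x y : qcar M q), S q x -> S q y -> S q (a *: x + y)) &
      (forall q q' (x : qcar M q), qle q q' -> S q x -> S q' (qmap M q q' x))].

Definition essential (M : qmod Q k) (S : qsub M) : Prop :=
  forall N : qsub M, is_qsub N -> (exists q (x : qcar M q), N q x /\ x <> 0) ->
    exists q (x : qcar M q), [/\ N q x, S q x & x <> 0].

Definition tau_inv (tau : set Q) (N : qmod Q k) : Prop :=
  forall f, tau f -> forall q, bijective (qmap N q (q + f)).

(** (L, i) is the localization M_tau = M (x)_{k[Q_+]} k[Q_+ + Z tau],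
    characterized (up to unique isomorphism) by its universal property:
    the universal morphism from M to a Q-module on which tau acts invertibly. *)
Definition is_loc (tau : set Q) (M L : qmod Q k) (i : qhom M L) : Prop :=
  [/\ is_qmod L, tau_inv tau L, is_qhom i &
    forall (N : qmod Q k) (phi : qhom M N), is_qmod N -> tau_inv tau N -> is_qhom phi ->
      (exists psi : qhom L N, is_qhom psi /\ forall q x, psi q (i q x) = phi q x) /\
      (forall psi psi' : qhom L N, is_qhom psi -> is_qhom psi' ->
         (forall q x, psi q (i q x) = phi q x) ->
         (forall q x, psi' q (i q x) = phi q x) ->
         forall q y, psi q y = psi' q y)].

Definition in_loc_ker (tau : set Q) (M : qmod Q k) q (x : qcar M q) : Prop :=
  exists (L : qmod Q k) (i : qhom M L), is_loc tau i /\ i q x = 0.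

Definition Gamma (tau : set Q) (M : qmod Q k) : qsub M :=
  fun q x => forall t, is_face t -> ~ (t `<=` tau) -> in_loc_ker t x.

Definition coprimary (M : qmod Q k) : Prop :=
  exists tau, is_face tau /\
    exists (L : qmod Q k) (i : qhom M L),
      [/\ is_loc tau i, (forall q, injective (i q)) & essential (@Gamma tau L)].

Definition is_quotient (M : qmod Q k) (S : qsub M) (P : qmod Q k) (p : qhom M P) : Prop :=
  [/\ is_qmod P, is_qhom p,
      (forall q (y : qcar P q), exists x, p q x = y) &
      (forall q (x : qcar M q), p q x = 0 <-> S q x)].

(** downsets and downset modules k[D]: k in degrees of D, 0 elsewhere,
    identity maps inside D (realized as 1x1 resp. 1x0 row vectors) *)
Definition is_downset (D : set Q) : Prop :=
  forall d a, D d -> Qp a -> D (d - a).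

Definition kD (D : set Q) : qmod Q k :=
  @QMod Q k (fun q => ('rV[k]_(asbool (D q)) : lmodType k))
        (fun q q' x => x *m const_mx 1).

(** M admits a finite downset hull M -> E_1 (+) ... (+) E_n: a finite family
    of homomorphisms to downset modules that is jointly injective *)
Definition downset_finite (M : qmod Q k) : Prop :=
  exists n (D : 'I_n -> set Q) (phi : forall j, qhom M (kD (D j))),
    [/\ (forall j, is_downset (D j)), (forall j, is_qhom (phi j)) &
        (forall q (x : qcar M q), (forall j, phi j q x = 0) -> x = 0)].

End Defs.

(* Main.v *)
Require Import Defs.
From HB Require Import structures.
From mathcomp Require Import all_boot all_algebra.
From mathcomp Require Import boolp classical_sets cardinality.
Set Implicit Arguments. Unset Strict Implicit. Unset Printing Implicit Defensive.
Import GRing.Theory.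
Local Open Scope classical_set_scope.
Local Open Scope ring_scope.

Section Mx.
Variable k : fieldType.

Lemma rv0 (P : Prop) (y : 'rV[k]_(asbool P)) : ~ P -> y = 0.
Proof. move=> nP; move: y; rewrite asboolF // => y; exact: thinmx0. Qed.

Lemma cmx2 (b1 b2 b3 : bool) (x : 'rV[k]_b1) : (b1 -> b3 -> b2) ->
  x *m (const_mx 1 : 'M_(b1, b2)) *m (const_mx 1 : 'M_(b2, b3)) = x *m const_mx 1.
Proof.
case: b1 x => x; last by rewrite (thinmx0 x) !mul0mx.
case: b3 => H; last by rewrite (thinmx0 (_ *m _)) (thinmx0 (x *m _)).
have -> : b2 = true by exact: H.
apply/matrixP => i j; rewrite !mxE big_ord1 !mxE big_ord1 !mxE big_ord1 !mxE.
by rewrite !mulr1.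
Qed.

Lemma cmx1 (b : bool) (x : 'rV[k]_b) : x *m (const_mx 1 : 'M_(b, b)) = x.
Proof.
case: b x => x; last by rewrite (thinmx0 x) mul0mx.
apply/matrixP => i j; rewrite !mxE big_ord1 !mxE mulr1.
by rewrite (ord1 i) (ord1 j).
Qed.

Lemma cmx_inj (b1 b2 : bool) : (b1 -> b2) ->
  injective (fun x : 'rV[k]_b1 => x *m (const_mx 1 : 'M_(b1, b2))).
Proof.
move=> H x y /= E.
case: b1 x y E H => x y E H; last by rewrite (thinmx0 x) (thinmx0 y).
have := cmx2 x (b2 := b2) (b3 := true) (fun _ _ => H isT).
have := cmx2 y (b2 := b2) (b3 := true) (fun _ _ => H isT).
by rewrite E !cmx1 => -> ->.
Qed.

Lemma rv_scale (b : bool) (w y : 'rV[k]_b) : w != 0 -> exists a, y = a *: w.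
Proof.
case: b w y => w y nw; last by exists 0; rewrite (thinmx0 y) scale0r.
have w0 : w 0 0 != 0.
  apply: contra nw => /eqP E; apply/eqP/matrixP => i j.
  by rewrite (ord1 i) (ord1 j) E mxE.
exists (y 0 0 / w 0 0); apply/matrixP => i j; rewrite (ord1 i) (ord1 j) mxE.
by rewrite divfK.
Qed.
End Mx.

Section Basic.
Variables (Q : zmodType) (Qp : set Q) (k : fieldType).
Hypothesis poag : is_poag Qp.

Lemma Qp0 : Qp 0. Proof. by case: poag. Qed.
Lemma QpD a b : Qp a -> Qp b -> Qp (a + b). Proof. by case: poag => _ H _ _; apply: H. Qed.

Lemma qle_refl q : qle Qp q q. Proof. by rewrite /qle subrr; exact: Qp0. Qed.
Lemma qle_trans a b c : qle Qp a b -> qle Qp b c -> qle Qp a c.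
Proof.
rewrite /qle => H1 H2; have -> : c - a = (c - b) + (b - a) by rewrite addrA subrK.
exact: QpD.
Qed.
Lemma qle_addr a b f : qle Qp a b -> qle Qp (a + f) (b + f).
Proof. by rewrite /qle opprD addrACA subrr addr0. Qed.
Lemma qle_add a f : Qp f -> qle Qp a (a + f).
Proof. by rewrite /qle [a + f]addrC addrK. Qed.

Lemma down_le D q p : is_downset Qp D -> qle Qp q p -> D p -> D q.
Proof. by move=> HD H Dp; have := HD p (p - q) Dp H; rewrite subKr. Qed.

Lemma linP (V W : lmodType k) (f : V -> W) :
  (forall a x y, f (a *: x + y) = a *: f x + f y) ->
  [/\ f 0 = 0, (forall a x, f (a *: x) = a *: f x) & (forall x y, f (x + y) = f x + f y)].
Proof.
move=> H; have f0 : f 0 = 0.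
  by have := H (-1) 0 0; rewrite scaler0 addr0 scaleN1r addNr.
split=> // [a x|x y]; first by have := H a x 0; rewrite !addr0 f0 addr0.
by have := H 1 x y; rewrite !scale1r.
Qed.

Definition convex (J : set Q) := forall q q' q'', qle Qp q q' -> qle Qp q' q'' ->
  J q -> J q'' -> J q'.

Lemma kD_qmod J : convex J -> is_qmod Qp (kD k J).
Proof.
move=> cJ; split => /=.
- by move=> q q' _ a x y; rewrite mulmxDl scalemxAl.
- by move=> q x; rewrite cmx1.
- move=> q q' q'' H1 H2 x; rewrite cmx2 // => /asboolP h1 /asboolP h3.
  by apply/asboolP; exact: cJ h1 h3.
Qed.

Lemma face_sub t : is_face Qp t -> forall a, t a -> Qp a.
Proof. by case. Qed.
Lemma face0 t : is_face Qp t -> t 0. Proof. by case. Qed.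
Lemma faceD t : is_face Qp t -> forall a b, t a -> t b -> t (a + b). Proof. by case. Qed.

Definition Jt (J t : set Q) : set Q :=
  fun q => exists f, t f /\ forall g, t g -> J (q + (f + g)).

Lemma Jt_convex J t : convex J -> is_face Qp t -> convex (Jt J t).
Proof.
move=> cJ ft q q' q'' H1 H2 [f [tf Hf]] [f'' [tf'' Hf'']].
exists (f + f''); split; first exact: faceD.
move=> g tg.
have e1 : f + (f'' + g) = (f + f'') + g by rewrite addrA.
have e2 : f'' + (f + g) = (f + f'') + g by rewrite addrCA addrA.
apply: (cJ (q + (f + f'' + g)) _ (q'' + (f + f'' + g))).
- exact: qle_addr.
- exact: qle_addr.
- rewrite -e1; apply: Hf; exact: faceD.
- rewrite -e2; apply: Hf''; exact: faceD.
Qed.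

Lemma Jt_add J t q h : is_face Qp t -> t h -> (Jt J t (q + h) <-> Jt J t q).
Proof.
move=> ft th; split.
- move=> [f [tf Hf]]; exists (h + f); split; first exact: faceD.
  by move=> g tg; rewrite -[h + f + g]addrA (addrA q); apply: Hf.
- move=> [f [tf Hf]]; exists f; split => // g tg.
  rewrite -addrA (addrCA h); apply: Hf; exact: faceD.
Qed.

Lemma J_Jt J t q : is_face Qp t -> (forall q f, J q -> t f -> J (q + f)) -> J q -> Jt J t q.
Proof.
move=> ft HJ Jq; exists 0; split; first exact: face0.
by move=> g tg; rewrite add0r; apply: HJ.
Qed.

Definition iloc (J t : set Q) : qhom (kD k J) (kD k (Jt J t)) :=
  fun q x => x *m const_mx 1.
Arguments iloc : clear implicits.

Lemma iloc_qhom J t : convex J -> is_face Qp t -> is_qhom Qp (iloc J t).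
Proof.
move=> cJ ft; split => /=.
- by move=> q a x y; rewrite /iloc mulmxDl scalemxAl.
- move=> q q' Hqq' x; rewrite /iloc /= !cmx2 //.
  + move=> /asboolP Jq /asboolP [f [tf Hf]]; apply/asboolP.
    exists f; split => // g tg.
    apply: (cJ q _ (q' + (f + g))) => //.
      by apply: qle_add; apply: QpD; [exact: (face_sub ft tf) | exact: (face_sub ft tg)].
    + exact: qle_addr.
    + exact: Hf.
  + move=> /asboolP Jq /asboolP [f [tf Hf]]; apply/asboolP.
    apply: (cJ q _ (q' + (f + 0))) => //.
    - apply: qle_add; rewrite addr0; exact: (face_sub ft tf).
    - apply: Hf; exact: face0.
Qed.
End Basic.
Arguments iloc {Q} k J t q x.

Section Univ.
Variables (Q : zmodType) (Qp : set Q) (k : fieldType).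
Hypothesis poag : is_poag Qp.
Unset Implicit Arguments.
Variables (J t : set Q) (N : qmod Q k) (phi : qhom (kD k J) N).
Set Implicit Arguments.
Hypotheses (cJ : convex Qp J) (ft : is_face Qp t) (qN : is_qmod Qp N)
  (iN : tau_inv t N) (hphi : is_qhom Qp phi).

Definition fsel q : Q := xget 0 [set f | t f /\ forall g, t g -> J (q + (f + g))].

Lemma fsel_t q : t (fsel q).
Proof. rewrite /fsel; case: xgetP => [x _ [] //|_]; exact: face0 ft. Qed.

Lemma fsel_J q : Jt J t q -> forall g, t g -> J (q + (fsel q + g)).
Proof. by move=> H; have [] := xgetPex 0 (P := [set f | t f /\ forall g, t g -> J (q + (f + g))]) H. Qed.

Lemma tQp f : t f -> Qp f. Proof. by case: ft => H _ _ _; apply: H. Qed.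

Definition psi : qhom (kD k (Jt J t)) N := fun q y =>
  xget 0 [set z | qmap N q (q + fsel q) z =
     phi (q + fsel q) (y *m const_mx 1 : qcar (kD k J) (q + fsel q))].
Arguments psi : clear implicits.

Lemma qmap_lin q q' : qle Qp q q' -> forall a x y,
  qmap N q q' (a *: x + y) = a *: qmap N q q' x + qmap N q q' y.
Proof. by case: qN => H _ _; apply: H. Qed.

Lemma qmap0 q q' : qle Qp q q' -> qmap N q q' 0 = 0.
Proof. by move=> H; case: (linP (qmap_lin H)). Qed.

Lemma qmap_comp q q' q'' : qle Qp q q' -> qle Qp q' q'' -> forall x,
  qmap N q' q'' (qmap N q q' x) = qmap N q q'' x.
Proof. by case: qN => _ _ H; apply: H. Qed.

Lemma qmap_id q x : qmap N q q x = x.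
Proof. by case: qN => _ H _; apply: H. Qed.

Lemma qinj q f : t f -> injective (qmap N q (q + f)).
Proof. by move=> tf; apply: bij_inj; apply: iN. Qed.

Lemma phi0 q : phi q 0 = 0.
Proof. by case: hphi => H _; case: (linP (H q)). Qed.

Lemma phi_comm q q' x : qle Qp q q' -> phi q' (x *m const_mx 1) = qmap N q q' (phi q x).
Proof. by case: hphi => _ H /H; apply. Qed.

Lemma psi_spec q y : qmap N q (q + fsel q) (psi q y) =
  phi (q + fsel q) (y *m const_mx 1 : qcar (kD k J) (q + fsel q)).
Proof.
rewrite /psi; set w := phi _ _.
have [g _ K] := iN (fsel_t q) q.
apply: (xgetPex 0 (P := fun z => qmap N q (q + fsel q) z = w)).
by exists (g w).
Qed.

Lemma psi_lin q a y y' : psi q (a *: y + y') = a *: psi q y + psi q y'.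
Proof.
apply: (qinj (fsel_t q)).
have Hle : qle Qp q (q + fsel q) by apply: qle_add => //; apply: tQp; apply: fsel_t.
rewrite qmap_lin // !psi_spec /= mulmxDl -scalemxAl.
by case: hphi => H _; rewrite H.
Qed.

Lemma psi0 q : psi q 0 = 0.
Proof. by case: (linP (@psi_lin q)). Qed.

Lemma psiA q r y : qle Qp q r -> (forall g, t g -> J (r + g)) ->
  qmap N q r (psi q y) = phi r (y *m const_mx 1 : qcar (kD k J) r).
Proof.
move=> Hqr Jr; have [Hq|Hq] := pselect (Jt J t q); last first.
  by rewrite (rv0 (P := Jt J t q) y Hq) psi0 qmap0 // mul0mx phi0.
set f := fsel q; have tf : t f by apply: fsel_t.
have Jf := fsel_J Hq; have Qf := tQp tf.
apply: (qinj (q := r) tf).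
rewrite qmap_comp //; last exact: (qle_add _ Qf).
rewrite -(@qmap_comp q (q + f) (r + f) (qle_add _ Qf) (qle_addr _ Hqr) (psi q y)).
rewrite psi_spec -phi_comm; last exact: (qle_add _ Qf).
rewrite -phi_comm; last exact: (qle_addr _ Hqr).
rewrite /= !cmx2 // => _ _; apply/asboolP.
- by have := Jr 0 (face0 ft); rewrite addr0.
- by have := Jf 0 (face0 ft); rewrite addr0.
Qed.

Lemma psiB q r y : qle Qp q r -> ~ Jt J t r -> qmap N q r (psi q y) = 0.
Proof.
move=> Hqr Hr; have [Hq|Hq] := pselect (Jt J t q); last first.
  by rewrite (rv0 (P := Jt J t q) y Hq) psi0 qmap0.
set f := fsel q; have tf : t f by apply: fsel_t.
have Jf := fsel_J Hq; have Qf := tQp tf.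
have [g [tg Jg]] : exists g, t g /\ ~ J (r + (f + g)).
  apply: contra_notP Hr => H; exists f; split => // g tg.
  by apply: contra_notP H => H; exists g.
have tfg : t (f + g) by exact: (faceD ft).
have Hfg : Qp (f + g) by apply: tQp.
have H1 : qle Qp (q + f) (r + (f + g)).
  apply: (qle_trans poag (qle_addr f Hqr)); rewrite addrA; apply: qle_add; exact: tQp.
apply: (qinj (q := r) tfg); rewrite qmap0; last exact: (qle_add _ Hfg).
rewrite qmap_comp //; last exact: (qle_add _ Hfg).
rewrite -(@qmap_comp q (q + f) (r + (f + g)) (qle_add _ Qf) H1 (psi q y)).
rewrite psi_spec -phi_comm //.
by rewrite [X in phi _ X](rv0 (P := J (r + (f + g))) _ Jg) phi0.
Qed.

Lemma psi_qhom : is_qhom Qp psi.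
Proof.
split; first by move=> q a x y; apply: psi_lin.
move=> q q' Hqq' y.
have [Hq'|Hq'] := pselect (Jt J t q'); last first.
  by rewrite (psiB _ Hqq' Hq') [X in psi _ X](rv0 (P := Jt J t q') _ Hq') psi0.
set f := fsel q'; have tf : t f by apply: fsel_t.
have Jf := fsel_J Hq'; have Qf := tQp tf.
apply: (qinj (q := q') tf).
rewrite psi_spec qmap_comp //; last exact: qle_add.
rewrite psiA //.
- rewrite /= cmx2 // => _ _; by apply/asboolP.
- exact: (qle_trans poag Hqq' (qle_add _ Qf)).
- by move=> g tg; rewrite -addrA; apply: Jf.
Qed.

Lemma psi_fac q x : psi q (iloc k J t q x) = phi q x.
Proof.
rewrite /iloc.
have [Jq|Jq] := pselect (J q); last first.
  by rewrite (rv0 (P := J q) x Jq) mul0mx psi0 phi0.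
have [Hq|Hq] := pselect (Jt J t q); last first.
  rewrite [X in psi _ X](rv0 (P := Jt J t q) _ Hq) psi0.
  have [g [tg Jg]] : exists g, t g /\ ~ J (q + (0 + g)).
    apply: contra_notP Hq => H; exists 0; split; first exact: (face0 ft).
    by move=> g tg; apply: contra_notP H => H; exists g.
  rewrite add0r in Jg.
  apply: (qinj (q := q) tg); rewrite qmap0; last by apply: qle_add; apply: tQp.
  rewrite -phi_comm; last by apply: qle_add; apply: tQp.
  by rewrite [X in phi _ X](rv0 (P := J (q + g)) _ Jg) phi0.
set f := fsel q; have tf : t f by apply: fsel_t.
have Jf := fsel_J Hq; have Qf := tQp tf.
apply: (qinj (q := q) tf).
rewrite psi_spec -phi_comm; last exact: (qle_add _ Qf).
rewrite /= cmx2 // => _ _; by apply/asboolP.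
Qed.

Lemma psi_unique (p1 p2 : qhom (kD k (Jt J t)) N) :
  is_qhom Qp p1 -> is_qhom Qp p2 ->
  (forall q x, p1 q (iloc k J t q x) = phi q x) ->
  (forall q x, p2 q (iloc k J t q x) = phi q x) ->
  forall q y, p1 q y = p2 q y.
Proof.
move=> [l1 c1] [l2 c2] e1 e2 q y.
have [Hq|Hq] := pselect (Jt J t q); last first.
  rewrite (rv0 (P := Jt J t q) y Hq).
  by case: (linP (l1 q)) => -> _ _; case: (linP (l2 q)) => -> _ _.
set f := fsel q; have tf : t f by apply: fsel_t.
have Jf := fsel_J Hq; have Qf := tQp tf.
have Hle : qle Qp q (q + f) by apply: qle_add.
apply: (qinj (q := q) tf); rewrite -c1 // -c2 //.
have -> : qmap (kD k (Jt J t)) q (q + f) y =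
   iloc k J t (q + f) (y *m const_mx 1 : qcar (kD k J) (q + f)).
  rewrite /iloc /= cmx2 // => _ _; apply/asboolP.
  by have := Jf 0 (face0 ft); rewrite addr0.
by rewrite e1 e2.
Qed.

End Univ.

Lemma loc_kD (Q : zmodType) (Qp : set Q) (k : fieldType) (J t : set Q) :
  is_poag Qp -> convex Qp J -> is_face Qp t -> is_loc Qp t (iloc k J t).
Proof.
move=> poag cJ ft; split.
- by apply: kD_qmod; apply: Jt_convex.
- move=> f tf q /=.
  have e : `[< Jt J t q >] = `[< Jt J t (q + f) >].
    by apply: asbool_equiv_eq; apply: iff_sym; apply: (Jt_add J q ft tf).
  exists (fun y : 'rV[k]_(`[< Jt J t (q + f) >]) => y *m (const_mx 1 : 'M_(_, `[< Jt J t q >]))).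
  + by move=> x; rewrite cmx2 ?cmx1 // e.
  + by move=> x; rewrite cmx2 ?cmx1 // e.
- exact: iloc_qhom.
- move=> N phi qN iN hphi; split.
  + exists (psi phi); split; first exact: (psi_qhom poag ft qN iN hphi).
    by move=> q x; apply: (psi_fac ft qN iN hphi).
  + by move=> p1 p2 h1 h2 e1 e2; apply: (psi_unique ft iN h1 h2 e1 e2).
Qed.

Lemma kD_coprimary (Q : zmodType) (Qp : set Q) (k : fieldType) (I tau : set Q) :
  is_poag Qp -> convex Qp I -> is_face Qp tau ->
  (forall q f, I q -> tau f -> I (q + f)) ->
  (forall q, Jt I tau q -> exists q', [/\ qle Qp q q', Jt I tau q' &
      forall t, is_face Qp t -> ~ (t `<=` tau) -> forall f, t f ->
        exists g, t g /\ ~ Jt I tau (q' + (f + g))]) ->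
  coprimary Qp (kD k I).
Proof.
move=> poag cI ftau Iadd Ess.
have cJ : convex Qp (Jt I tau) by apply: Jt_convex.
exists tau; split => //.
exists (kD k (Jt I tau)), (iloc k I tau); split.
- exact: loc_kD.
- move=> q; apply: cmx_inj => /asboolP h; apply/asboolP.
  by apply: J_Jt; [exact: ftau | exact: Iadd | exact: h].
- move=> N' [N0 Nlin Nmap] [q [x [Nx x0]]].
  have Hq : Jt I tau q.
    by apply: contra_notP x0 => H; apply: (rv0 (P := Jt I tau q)).
  have [q' [Hle Hq' Hg]] := Ess q Hq.
  exists q', (qmap (kD k (Jt I tau)) q q' x); split.
  + exact: Nmap.
  + move=> t ft nsub.
    exists (kD k (Jt (Jt I tau) t)), (iloc k (Jt I tau) t); split.
      exact: loc_kD.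
    apply: (rv0 (P := Jt (Jt I tau) t q')) => -[f [tf Hf]].
    have [g [tg Hng]] := Hg t ft nsub f tf.
    by apply: Hng; apply: Hf.
  + move=> /= E; apply: x0.
    have inj := @cmx_inj k `[< Jt I tau q >] `[< Jt I tau q' >].
    apply: (inj _); first by move=> _; apply/asboolP.
    by rewrite /= E mul0mx.
Qed.

Lemma count_lt (T : eqType) (a b : pred T) (s : seq T) x :
  (forall y, a y -> b y) -> x \in s -> b x -> ~~ a x -> (count a s < count b s)%N.
Proof.
move=> ab; elim: s => // y s IH; rewrite inE => /orP [/eqP <-|xs] bx ax /=.
  rewrite bx (negbTE ax) add0n add1n ltnS; exact: sub_count.
have := IH xs bx ax; case ay: (a y); first by rewrite (ab _ ay) !add1n ltnS.
by rewrite add0n => H; apply: (leq_trans H); apply: leq_addl.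
Qed.

Section Comb.
Variables (Q : zmodType) (Qp : set Q) (k : fieldType).
Hypothesis poag : is_poag Qp.
Variable D : set Q.
Hypothesis dD : is_downset Qp D.

Definition Fc p (t : set Q) := forall a, t a -> D (p + a).
Definition stable p := forall p', qle Qp p p' -> D p' ->
  forall t, is_face Qp t -> Fc p t -> Fc p' t.
Definition Tt tau p := [/\ D p, stable p, Fc p tau &
  forall t, is_face Qp t -> Fc p t -> t `<=` tau].
Definition Et tau q := exists p, Tt tau p /\ qle Qp q p.

Lemma Fc_anti p p' t : is_face Qp t -> qle Qp p p' -> Fc p' t -> Fc p t.
Proof.
move=> ft H F a ta; apply: (down_le dD (qle_addr a H)); exact: F.
Qed.

Lemma Tt_add tau p f : is_face Qp tau -> Tt tau p -> tau f -> Tt tau (p + f).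
Proof.
move=> ftau [Dp sp Fp mp] tf.
have Qf : Qp f by case: ftau => H _ _ _; apply: H.
have Hle := qle_add p Qf.
have Dpf : D (p + f) by apply: Fp.
have back : forall t, is_face Qp t -> Fc (p + f) t -> Fc p t.
  by move=> t ft; apply: Fc_anti.
split => //.
- move=> p' H Dp' t ft F; apply: (sp p' (qle_trans poag Hle H) Dp' t ft).
  exact: back.
- exact: (sp _ Hle Dpf tau ftau Fp).
- by move=> t ft F; apply: mp => //; apply: back.
Qed.

Lemma Et_D tau q : Et tau q -> D q.
Proof. by move=> [p [[Dp _ _ _] H]]; apply: down_le H Dp. Qed.

Lemma Et_down tau q q' : Et tau q' -> qle Qp q q' -> Et tau q.
Proof. by move=> [p [Tp H]] H'; exists p; split => //; apply: qle_trans H. Qed.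

Lemma Et_add tau q f : is_face Qp tau -> Et tau q -> tau f -> Et tau (q + f).
Proof.
move=> ftau [p [Tp H]] tf; exists (p + f); split; first exact: Tt_add.
exact: qle_addr.
Qed.

Lemma stable_exists (s : seq (set Q)) :
  [set t | is_face Qp t] = [set` s] ->
  forall q, D q -> exists p, [/\ qle Qp q p, D p & stable p].
Proof.
move=> hs q Dq.
pose m p := count (fun t => `[< is_face Qp t /\ Fc p t >]) s.
suff : forall n p, qle Qp q p -> D p -> (m p <= n)%N ->
    exists p', [/\ qle Qp q p', D p' & stable p'].
  by move=> /(_ (m q) q (qle_refl poag q) Dq (leqnn _)).
have step : forall p, ~ stable p -> exists p', [/\ qle Qp p p', D p' & (m p' < m p)%N].
  move=> p nsp.
  have [p' [Hle Dp' [t [ft Fp nFp']]]] :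
     exists p', [/\ qle Qp p p', D p' & exists t, [/\ is_face Qp t, Fc p t & ~ Fc p' t]].
    apply: contra_notP nsp => H p' Hle Dp' t ft Fp.
    apply: contra_notP H => H; exists p'; split => //; exists t; split => //.
  exists p'; split => //; apply: (count_lt (x := t)).
  - move=> u /asboolP [fu F]; apply/asboolP; split => //; exact: (Fc_anti fu Hle F).
  - by have : [set t | is_face Qp t] t by []; rewrite hs.
  - by apply/asboolP.
  - by apply/negP => /asboolP [].
elim=> [|n IH] p Hqp Dp Hm.
  have [sp|nsp] := pselect (stable p); first by exists p.
  have [p' [_ _ lt]] := step p nsp.
  by move: (leq_trans lt Hm).
have [sp|nsp] := pselect (stable p); first by exists p.
have [p' [Hle Dp' lt]] := step p nsp.
apply: (IH p') => //; first exact: qle_trans Hqp Hle.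
by rewrite -ltnS; apply: leq_trans lt Hm.
Qed.

Definition taup p : set Q := fun a => exists t, [/\ is_face Qp t, Fc p t & t a].

Lemma face_zero : is_face Qp [set 0].
Proof.
split.
- by move=> a ->; exact: (Qp0 poag).
- by [].
- by move=> a b -> ->; rewrite addr0.
- move=> a b Qa na Qb /= E; apply: na; rewrite /=.
  case: poag => _ _ H _; apply: H => //.
  by have -> : - a = b by apply/eqP; rewrite eq_sym -subr_eq0 opprK addrC E.
Qed.

Lemma taup_face p : D p -> stable p -> is_face Qp (taup p).
Proof.
move=> Dp sp; split.
- by move=> a [t [ft _ ta]]; case: ft => H _ _ _; apply: H.
- exists [set 0]; split => //; first exact: face_zero.
  by move=> a /= ->; rewrite addr0.
- move=> a b [t1 [f1 F1 a1]] [t2 [f2 F2 b2]].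
  pose sg := fun x => Qp x /\ exists c u v, [/\ Qp c, t1 u, t2 v & x + c = u + v].
  have Q1 : forall u, t1 u -> Qp u by case: f1.
  have Q2 : forall u, t2 u -> Qp u by case: f2.
  exists sg; split.
  + split.
    * by move=> x [].
    * split; first exact: (Qp0 poag).
      by exists 0, 0, 0; rewrite addr0; split => //; [exact: (Qp0 poag)|exact: face0 f1|exact: face0 f2].
    * move=> x y [Qx [c [u [v [Qc tu tv E]]]]] [Qy [c' [u' [v' [Qc' tu' tv' E']]]]].
      split; first exact: (QpD poag).
      exists (c + c'), (u + u'), (v + v'); split.
      - exact: (QpD poag).
      - exact: faceD f1 _ _ tu tu'.
      - exact: faceD f2 _ _ tv tv'.
      - by rewrite addrACA E E' addrACA.
    * move=> x y Qx nx Qy [_ [c [u [v [Qc tu tv E]]]]]; apply: nx.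
      split => //; exists (y + c), u, v; split => //; first exact: (QpD poag).
      by rewrite addrA.
  + move=> x [Qx [c [u [v [Qc tu tv E]]]]].
    have Dpu : D (p + u) by apply: F1.
    have Hle : qle Qp p (p + u) by apply: qle_add; apply: Q1.
    have Dpuv : D (p + u + v) by apply: (sp _ Hle Dpu t2 f2 F2).
    apply: (down_le dD _ Dpuv).
    by rewrite -addrA -E addrA; apply: qle_add.
  + split; first by apply: (QpD poag); [exact: Q1 a1|exact: Q2 b2].
    exists 0, a, b; split => //; [exact: (Qp0 poag)|by rewrite addr0].
- move=> a b Qa na Qb [t [ft Ft tab]]; apply: na; exists t; split => //.
  case: ft => _ _ _ H; apply: contrapT => nta; exact: (H a b Qa nta Qb tab).
Qed.

Lemma Tt_taup p : D p -> stable p -> Tt (taup p) p.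
Proof.
move=> Dp sp; split => //.
- by move=> a [t [ft Ft ta]]; apply: Ft.
- by move=> t ft Ft a ta; exists t.
Qed.

Lemma cover (s : seq (set Q)) : [set t | is_face Qp t] = [set` s] ->
  forall q, D q -> exists tau, is_face Qp tau /\ Et tau q.
Proof.
move=> hs q Dq; have [p [Hle Dp sp]] := stable_exists hs Dq.
exists (taup p); split; first exact: taup_face.
by exists p; split => //; apply: Tt_taup.
Qed.

End Comb.

Section Piece.
Variables (Q : zmodType) (Qp : set Q) (k : fieldType).
Hypothesis poag : is_poag Qp.
Variables (M : qmod Q k) (D : set Q).
Unset Implicit Arguments.
Variable (phi : qhom M (kD k D)).
Set Implicit Arguments.
Hypotheses (qM : is_qmod Qp M) (dD : is_downset Qp D) (hphi : is_qhom Qp phi).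

Definition U q := exists x : qcar M q, phi q x <> 0.

Lemma phiL q : forall a x y, phi q (a *: x + y) = a *: phi q x + phi q y.
Proof. by case: hphi. Qed.

Lemma phiC q q' x : qle Qp q q' -> phi q' (qmap M q q' x) = phi q x *m const_mx 1.
Proof. by case: hphi => _ H /H; apply. Qed.

Lemma U_D q : U q -> D q.
Proof. move=> [x nx]; apply: contrapT => nD; apply: nx; exact: (rv0 (P := D q)). Qed.

Lemma U_up q q' : U q -> qle Qp q q' -> D q' -> U q'.
Proof.
move=> [x nx] H Dq'; exists (qmap M q q' x); rewrite phiC //.
move=> E; apply: nx.
have inj := @cmx_inj k `[< D q >] `[< D q' >].
apply: (inj _); first by move=> _; apply/asboolP.
by rewrite /= E mul0mx.
Qed.

Definition Ip tau q := Et Qp D tau q /\ U q.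

Lemma Ip_D tau q : Ip tau q -> D q.
Proof. by move=> [E _]; apply: Et_D E. Qed.

Lemma Ip_convex tau : convex Qp (Ip tau).
Proof.
move=> q q' q'' H1 H2 [E1 U1] [E2 U2]; split.
- exact: Et_down E2 H2.
- apply: U_up U1 H1 _; exact: Et_D (Et_down poag E2 H2).
Qed.

Lemma Ip_add tau q f : is_face Qp tau -> Ip tau q -> tau f -> Ip tau (q + f).
Proof.
move=> ftau [E U1] tf.
have E' := Et_add poag dD ftau E tf.
split => //; apply: U_up U1 _ (Et_D dD E').
by apply: qle_add; case: ftau => H _ _ _; apply: H.
Qed.

Lemma Jt_D tau z : is_face Qp tau -> Jt (Ip tau) tau z -> D z.
Proof.
move=> ftau [h [th Hh]].
have := Ip_D (Hh 0 (face0 ftau)); rewrite addr0 => Dzh.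
apply: (down_le dD _ Dzh); apply: qle_add; case: ftau => H _ _ _; exact: H.
Qed.

Lemma Ip_ess tau : is_face Qp tau -> forall q, Jt (Ip tau) tau q ->
  exists q', [/\ qle Qp q q', Jt (Ip tau) tau q' &
      forall t, is_face Qp t -> ~ (t `<=` tau) -> forall f, t f ->
        exists g, t g /\ ~ Jt (Ip tau) tau (q' + (f + g))].
Proof.
move=> ftau q [f [tf Hf]].
have Qtau : forall a, tau a -> Qp a by case: ftau.
have [E1 U1] := Hf 0 (face0 ftau); rewrite addr0 in E1 U1.
have [p [[Dp sp Fp mp] Hle]] := E1.
have Hqp : qle Qp q p := qle_trans poag (qle_add q (Qtau f tf)) Hle.
have Tp : Tt Qp D tau p by split.
have Ip' : Ip tau p.
  split; first by exists p; split => //; exact: (qle_refl poag).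
  exact: U_up U1 Hle Dp.
exists p; split => //.
  apply: J_Jt; [exact: ftau | move=> z h Iz th; exact: (Ip_add ftau Iz th) | exact: Ip'].
move=> t ft nsub f' tf'; apply: contrapT => H; apply: nsub.
apply: mp => // a ta.
have Qt : forall a, t a -> Qp a by case: ft.
have : D (p + (f' + a)).
  apply: (Jt_D ftau); apply: contrapT => nJ; apply: H; exists a; split => //.
apply: (down_le dD).
by rewrite (addrC f' a) addrA; apply: qle_add; apply: Qt.
Qed.

Definition pmap tau : qhom M (kD k (Ip tau)) := fun q x => phi q x *m const_mx 1.
Arguments pmap : clear implicits.

Lemma pmap_qhom tau : is_qhom Qp (pmap tau).
Proof.
split.
- by move=> q a x y; rewrite /pmap phiL mulmxDl scalemxAl.
- move=> q q' H x; rewrite /pmap phiC //=.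
  have [E|nE] := eqVneq (phi q x) 0; first by rewrite E !mul0mx.
  rewrite !cmx2 //.
  + move=> _ /asboolP [E' U'] ; apply/asboolP; split; first exact: Et_down E' H.
    by exists x; apply/eqP.
  + by move=> _ /asboolP I'; apply/asboolP; apply: Ip_D I'.
Qed.

Lemma pmap_quot tau : is_face Qp tau ->
  is_quotient Qp (fun q x => pmap tau q x = 0) (pmap tau).
Proof.
move=> ftau; split.
- apply: kD_qmod; exact: Ip_convex.
- exact: pmap_qhom.
- move=> q y; have [Iq|nI] := pselect (Ip tau q); last first.
    exists 0; rewrite (rv0 (P := Ip tau q) y nI) /pmap.
    by have [-> _ _] := linP (phiL (q := q)); rewrite mul0mx.
  have [[x nx] Dq] := (Iq.2, Ip_D Iq).
  have w0 : pmap tau q x != 0.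
    apply/eqP => E; apply: nx.
    have inj := @cmx_inj k `[< D q >] `[< Ip tau q >].
    apply: (inj _); first by move=> _; apply/asboolP.
    by rewrite /= -/(pmap tau q x) E mul0mx.
  have [a ->] := rv_scale y w0.
  exists (a *: x); rewrite /pmap.
  by have [_ -> _] := linP (phiL (q := q)); rewrite -scalemxAl.
- by [].
Qed.

Lemma pmap_sub tau : is_qsub Qp (fun q x => pmap tau q x = 0).
Proof.
have [hl hc] := pmap_qhom tau.
split.
- by move=> q; have [-> _ _] := linP (hl q).
- by move=> q a x y Hx Hy; rewrite hl Hx Hy scaler0 addr0.
- by move=> q q' x H Hx; rewrite hc // Hx /= mul0mx.
Qed.

End Piece.
Arguments pmap {Q} Qp {k M D} phi tau q x.

Theorem theorem5p8 (Q : zmodType) (Qp : set Q) (k : fieldType) (M : qmod Q k) :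
  is_poag Qp -> polyhedral Qp -> is_qmod Qp M -> downset_finite Qp M ->
  exists r (Ms : 'I_r -> qsub M),
    [/\ (forall i, is_qsub Qp (Ms i)),
        (forall i, exists (P : qmod Q k) (p : qhom M P),
            is_quotient Qp (Ms i) p /\ coprimary Qp P) &
        (forall q (x : qcar M q), (forall i, Ms i q x) -> x = 0)].
Proof.
move=> poag poly qM [n [D [phi [dDs hphis inj]]]].
have [s hs] := (finite_seqP _).1 poly.
have fs : forall j : 'I_(size s), is_face Qp (nth set0 s j).
  move=> j; have : [set` s] (nth set0 s j) by rewrite /= mem_nth.
  by rewrite -hs.
pose T := ('I_n * 'I_(size s))%type.
pose Ms := fun i : 'I_#|{: T}| => fun q (x : qcar M q) =>
  pmap Qp (phi (enum_val i).1) (nth set0 s (enum_val i).2) q x = 0.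
exists #|{: T}|, Ms; split.
- move=> i; exact: (pmap_sub poag (dDs _) (hphis _)).
- move=> i; set j := (enum_val i).1; set tau := nth set0 s (enum_val i).2.
  have ftau : is_face Qp tau by apply: fs.
  exists (kD k (Ip Qp (phi j) tau)), (pmap Qp (phi j) tau); split.
    exact: (pmap_quot poag (dDs j) (hphis j) ftau).
  apply: kD_coprimary => //.
  + move=> q q' q''; exact: (Ip_convex poag (dDs j) (hphis j)).
  + by move=> q f Iq tf; apply: (Ip_add poag (dDs j) (hphis j) ftau Iq tf).
  + exact: (Ip_ess poag (dDs j) (hphis j) ftau).
- move=> q x H; apply: inj => j; apply: contrapT => nz.
  have Uq : U (phi j) q by exists x.
  have Dq := U_D Uq.
  have [tau [ftau Et]] := cover poag (dDs j) hs Dq.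
  have ts : tau \in s by have : [set` s] tau by rewrite -hs.
  have lt : (index tau s < size s)%N by rewrite index_mem.
  have := H (enum_rank (j, Ordinal lt)); rewrite /Ms enum_rankK /= nth_index //.
  move=> E; apply: nz.
  have inj' := @cmx_inj k `[< D j q >] `[< Ip Qp (phi j) tau q >].
  apply: (inj' _); first by move=> _; apply/asboolP; split.
  by rewrite mul0mx; exact: E.
Qed.
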